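(* Let $\mathbf A$ be a pseudo-Kleene lattice, and define $x\odot y=0$ if $x\leq y'$ and $x\odot y=y\land(x\lor y')$ otherwise; $x\to y=1$ if $x\leq y$ and $x\to y=x'\lor(x\land y)$ otherwise. The following are equivalent: (1) $R(\mathbf A)=(A,\land,\lor,\odot,\to,0,1)$ is a left-residuated $\ell$-groupoid; (2) $\mathbf A$ is super-paraorthomodular and, for all $x,y\in A$, if $x\not\leq y$ then $x\leq y\lor y'$ or $y'\leq x\lor y$.
   Context: A pseudo-Kleene lattice is an algebra $(A,\land,\lor,{}',0,1)$ that is a bounded lattice with an antitone involution ${}'$ ($x\leq y\Rightarrow y'\leq x'$, $x''=x$) satisfying $x\land x'\leq y\lor y'$. It is super-paraorthomodular if for all $x,y$: (SP1) $x\leq y$ and $x'\land y=(x\land x')\lor(y\land y')$ imply $y\land(x\lor x')=x\lor(y\land y')$; (SP2) $x\leq y$ implies $(x\land x')\lor(y\land y')=(x'\land y)\land(x'\land y)'$. A left-residuated $\ell$-groupoid is an algebra $(A,\land,\lor,\odot,\to,0,1)$ such that $(A,\land,\lor,0,1)$ is a bounded lattice, $x\odot 1=x=1\odot x$ for all $x$, and $x\odot y\leq z$ iff $x\leq y\to z$ for all $x,y,z$. *)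

(* Defs.v *)
From HB Require Import structures.
From mathcomp Require Import all_boot all_order.
Set Implicit Arguments. Unset Strict Implicit. Unset Printing Implicit Defensive.
Import Order.Theory.
Local Open Scope order_scope.

(* Bounded lattices are MathComp's [tbLatticeType d]; 0 = \bot, 1 = \top,
   /\ = `&`, \/ = `|`.  The unary operation ' is an explicit function c. *)
Section PKL.
Context {d : Order.disp_t} {T : tbLatticeType d} (c : T -> T).

Definition pseudo_kleene : Prop :=
  [/\ (forall x y : T, x <= y -> c y <= c x),
      (forall x : T, c (c x) = x) &
      (forall x y : T, x `&` c x <= y `|` c y)].

Definition super_paraorthomodular : Prop :=
  (forall x y : T, x <= y ->
     c x `&` y = (x `&` c x) `|` (y `&` c y) ->
     y `&` (x `|` c x) = x `|` (y `&` c y)) /\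
  (forall x y : T, x <= y ->
     (x `&` c x) `|` (y `&` c y) = (c x `&` y) `&` c (c x `&` y)).

Definition pk_mul (x y : T) : T :=
  if x <= c y then \bot else y `&` (x `|` c y).
Definition pk_imp (x y : T) : T :=
  if x <= y then \top else c x `|` (x `&` y).

(* (T, meet, join, mul, imp, \bot, \top) is a left-residuated l-groupoid
   (the bounded-lattice part is given by the structure on T) *)
Definition left_residuated_lgroupoid (mul imp : T -> T -> T) : Prop :=
  (forall x : T, mul x \top = x /\ mul \top x = x) /\
  (forall x y z : T, mul x y <= z <-> x <= imp y z).

End PKL.

(* Main.v *)
Require Import Defs.
From HB Require Import structures.
From mathcomp Require Import all_boot all_order.
Import Order.Theory.
Local Open Scope order_scope.

Ltac lat := solve [ by [] | exact: lexx | exact: le0x | exact: lex1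
  | rewrite lexI; apply/andP; split; lat
  | rewrite leUx; apply/andP; split; lat
  | apply: leIxl; lat | apply: leIxr; lat
  | apply: lexUl; lat | apply: lexUr; lat ].

Section Aux.
Context {d : Order.disp_t} {T : tbLatticeType d} (c : T -> T)
  (hA : forall x y : T, x <= y -> c y <= c x) (hI : forall x : T, c (c x) = x).

Lemma cle (x y : T) : (c x <= c y) = (y <= x).
Proof.
apply/idP/idP => h; last exact: hA.
by rewrite -(hI x) -(hI y); apply: hA.
Qed.

Lemma cJ (x y : T) : c (x `|` y) = c x `&` c y.
Proof.
apply/le_anti/andP; split.
  by rewrite lexI !hA // ?leUl ?leUr.
by rewrite -cle hI leUx -cle hI leIl -cle hI leIr.
Qed.

Lemma cM (x y : T) : c (x `&` y) = c x `|` c y.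
Proof. by rewrite -{1}(hI x) -{1}(hI y) -cJ hI. Qed.

Lemma c1 : c \top = \bot.
Proof. by apply/eqP; rewrite -lex0 -(hI \bot) hA // lex1. Qed.

Definition QQ := forall z b : T, z <= b -> ~~ (c z <= b) -> z `|` (b `&` c z) = b.
Definition PP1 := forall a y : T, a <= y -> ~~ (a <= c y) -> y `&` (a `|` c y) = a.

Lemma QP1 : QQ -> PP1.
Proof.
move=> hQ a y hay hn.
have h1 : c y <= c a by apply: hA.
have h2 : ~~ (c (c y) <= c a) by rewrite hI -cle hI.
have := hQ _ _ h1 h2.
move/(congr1 c); rewrite cJ cM !hI => E.
rewrite -[in RHS]E; by rewrite meetC.
Qed.

Lemma res_Q : (forall x y z : T, pk_mul c x y <= z <-> x <= pk_imp c y z) -> QQ.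
Proof.
move=> hR z b hzb hn.
apply/le_anti/andP; split; first lat.
case: (boolP (b <= z)) => hbz; first by apply: lexUl.
have := (hR b (c z) (c z `&` b)).1.
rewrite /pk_mul /pk_imp hI (negbTE hbz).
have H : ~~ (c z <= c z `&` b) by rewrite lexI lexx.
rewrite (negbTE H) => h.
have {}h := h ltac:(lat).
apply: (le_trans h); lat.
Qed.

Lemma res_C : (forall x y z : T, pk_mul c x y <= z <-> x <= pk_imp c y z) ->
  forall x y : T, ~~ (x <= y) -> x <= y `|` c y \/ c y <= x `|` y.
Proof.
move=> hR x y hxy.
case: (boolP (c y <= x `|` y)) => h; [by right | left].
have := (hR x (c y) (c y `&` (x `|` y))).1.
rewrite /pk_mul /pk_imp hI (negbTE hxy).
have H : ~~ (c y <= c y `&` (x `|` y)) by rewrite lexI lexx.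
rewrite (negbTE H) => h'.
have {}h' := h' (lexx _).
apply: (le_trans h'); lat.
Qed.

Lemma Q_SP1 : QQ -> forall x y : T, x <= y ->
     c x `&` y = (x `&` c x) `|` (y `&` c y) ->
     y `&` (x `|` c x) = x `|` (y `&` c y).
Proof.
move=> hQ x y hxy H.
have hcy : c y <= c x by apply: hA.
have hge : x `|` (y `&` c y) <= y `&` (x `|` c x) by lat.
case: (boolP (c x <= y)) => h.
  have hyx : c y <= x by rewrite -(hI x) cle.
  have hy : y `&` c y <= x by apply: leIxr.
  have hcx : c x <= x.
    have : c x <= (x `&` c x) `|` (y `&` c y) by rewrite -H lexI lexx h.
    move/le_trans; apply; lat.
  apply/le_anti; rewrite hge andbT.
  apply: leIxr; rewrite leUx lexUl //= lexUl //.
have E := hQ _ _ hxy h.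
rewrite meetC H in E.
apply/le_anti; rewrite hge andbT.
have hy : y <= x `|` (y `&` c y) by rewrite -{1}E; lat.
exact: leIxl.
Qed.

Lemma P1_SP2 : PP1 -> forall x y : T, x <= y ->
     (x `&` c x) `|` (y `&` c y) = (c x `&` y) `&` c (c x `&` y).
Proof.
move=> hP x y hxy.
have hcy : c y <= c x by apply: hA.
rewrite cM hI.
apply/le_anti/andP; split; first lat.
case: (boolP (x <= c y)) => h.
  have h' : x `|` c y <= c y by rewrite leUx h lexx.
  apply: lexUr; rewrite lexI; apply/andP; split; first lat.
  exact: leIxr.
rewrite -meetA (hP _ _ hxy h).
lat.
Qed.

Lemma SP_C_Q : super_paraorthomodular c ->
  (forall x y : T, ~~ (x <= y) -> x <= y `|` c y \/ c y <= x `|` y) -> QQ.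
Proof.
move=> [s1 s2] hC x y hxy hn.
have hcy : c y <= c x by apply: hA.
set x1 := x `|` (c x `&` y).
have hx1y : x1 <= y by rewrite /x1; lat.
have hxx1 : x <= x1 by rewrite /x1; lat.
have hcx1 : c x1 <= c x by apply: hA.
have H1 : c x1 `&` y = (x1 `&` c x1) `|` (y `&` c y).
  rewrite (s2 _ _ hx1y); apply/esym/le_anti/andP; split; first lat.
  rewrite lexI lexx /= cM hI; apply: lexUl; rewrite /x1; apply: lexUr.
  rewrite lexI; apply/andP; split; [exact: leIxl | lat].
have E1 := s1 _ _ hx1y H1.
have E2 : y `&` c y <= x1 by rewrite /x1; apply: lexUr; lat.
rewrite meetC -/x1.
apply/le_anti; rewrite hx1y /=.
apply/negPn/negP => hn1.
case: (hC _ _ hn1) => h.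
  apply: (negP hn1).
  have : y <= y `&` (x1 `|` c x1) by rewrite lexI lexx h.
  rewrite E1 => h'; apply: (le_trans h'); lat.
have h3 : c x1 <= y by apply: (le_trans h); lat.
have hyy : c y <= y := le_trans (hA _ _ hx1y) h3.
have hn2 : ~~ (c x <= c y).
  apply/negP => h4; move/negP: hn; apply; exact: le_trans h4 hyy.
case: (hC _ _ hn2); rewrite hI => h5.
  have : c x <= y by apply: (le_trans h5); lat.
  by rewrite (negbTE hn).
have : y <= x1.
  have h6 : y <= c x by apply: (le_trans h5); lat.
  rewrite /x1; apply: lexUr; lat.
by rewrite (negbTE hn1).
Qed.

Lemma Q_res : QQ -> left_residuated_lgroupoid (pk_mul c) (pk_imp c).
Proof.
move=> hQ; have hP := QP1 hQ.
split.
  move=> x; rewrite /pk_mul c1; split.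
    case: ifP => h; last by rewrite meet1x joinx0.
    by apply/esym/eqP; rewrite -lex0.
  case: ifP => h; last by rewrite join1x meetx1.
  have : c x = \top by apply/eqP; rewrite eq_le lex1.
  by move/(congr1 c); rewrite hI c1.
move=> x y z; rewrite /pk_mul /pk_imp.
case: (boolP (y <= z)) => hyz.
  split=> _; first exact: lex1.
  by case: ifP => _; [exact: le0x | exact: leIxl].
case: (boolP (x <= c y)) => hxy.
  by split=> _; [apply: lexUl | exact: le0x].
split.
  move=> h.
  have hy : ~~ (c (c y) <= x `|` c y).
    rewrite hI; apply/negP => hh; move/negP: hyz; apply.
    by apply: le_trans h; rewrite lexI lexx.
  have E := hQ _ _ (leUr (c y) x) hy.
  rewrite hI in E.
  apply: (le_trans (leUl x (c y))); rewrite -E.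
  rewrite leUx lexUl //= lexUr // lexI leIxr //= meetC //.
move=> h.
have ha : ~~ (y `&` z <= c y).
  apply/negP => hh; move/negP: hxy; apply; apply: (le_trans h); lat.
have E := hP _ _ (leIl y z) ha.
apply: (@le_trans _ _ (y `&` ((y `&` z) `|` c y))); last by rewrite E; lat.
rewrite lexI leIl /=; apply: leIxr; rewrite leUx; apply/andP; split; [by rewrite joinC | lat].
Qed.

End Aux.

Theorem theorem3p11 (d : Order.disp_t) (T : tbLatticeType d) (c : T -> T)
  (hPK : pseudo_kleene c) :
  left_residuated_lgroupoid (pk_mul c) (pk_imp c) <->
  (super_paraorthomodular c /\
   (forall x y : T, ~~ (x <= y) -> x <= y `|` c y \/ c y <= x `|` y)).
Proof.
case: hPK => hA hI _.
split.
  move=> [_ hR].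
  have hQ := @res_Q _ _ c hI hR.
  have hP := @QP1 _ _ c hA hI hQ.
  split; first split.
  - exact: (@Q_SP1 _ _ c hA hI hQ).
  - exact: (@P1_SP2 _ _ c hA hI hP).
  - exact: (@res_C _ _ c hI hR).
move=> [hS hC].
exact: (@Q_res _ _ c hA hI (@SP_C_Q _ _ c hA hI hS hC)).
Qed.
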